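(* Let $\mathbb{K}=\mathbb{R}$ or $\mathbb{C}$, let $(V,W_\ast)$ be a finite-dimensional $\mathbb{K}$-vector space with an increasing filtration, and let $\phi:A_1^\ast\to A_2^\ast$ be a morphism of cohomologically connected DGAs over $\mathbb{K}$ inducing isomorphisms on $0$-th and first cohomology. Then the induced functors $F(\phi):F^{nil}(A_1^\ast,V,W_\ast)\to F^{nil}(A_2^\ast,V,W_\ast)$ and $F_{gr}(\phi):F^{nil}_{gr}(A_1^\ast,V,W_\ast)\to F^{nil}_{gr}(A_2^\ast,V,W_\ast)$ are fully faithful.
   Context: A DGA $A^\ast$ is cohomologically connected if $H^0(A^\ast)\cong\mathbb{K}$. $W_k(\mathrm{End}(V))$ denotes the endomorphisms $f$ with $f(W_i V)\subset W_{i+k}V$ for all $i$. The category $F^{nil}(A^\ast,V,W_\ast)$ has objects $\omega\in A^1\otimes W_{-1}(\mathrm{End}(V))$ with $d\omega+\frac12[\omega,\omega]=0$, and morphisms from $\omega_1$ to $\omega_2$ the elements $a\in A^0\otimes W_0(\mathrm{End}(V))$ with $da+\omega_1a-a\omega_2=0$. The category $F^{nil}_{gr}(A^\ast,V,W_\ast)$ has the same objects, and morphisms from $\omega_1$ to $\omega_2$ the elements $a\in\mathrm{Id}_V+A^0\otimes W_{-1}(\mathrm{End}(V))$ with $da+\omega_1a-a\omega_2=0$. The functors $F(\phi),F_{gr}(\phi)$ apply $\phi\otimes\mathrm{id}$ to objects and morphisms. *)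

(* Defs.v *)
From HB Require Import structures.
From mathcomp Require Import all_boot all_order all_algebra.
From mathcomp Require Import complex.
From mathcomp Require Import Rstruct.

Import Order.TTheory GRing.Theory Num.Theory.
Local Open Scope ring_scope.

Definition Kfield (b : bool) : fieldType :=
  if b then (Rdefinitions.R : fieldType) else (complex Rdefinitions.R : fieldType).

(* A (commutative, non-negatively graded) differential graded algebra over K.
   The underlying algebra is A = (+)_{k >= 0} A^k, where A^k = dga_deg k. *)
Record DGA (K : fieldType) := {
  dga_car : algType K;
  dga_deg : nat -> {pred dga_car};
  dga_d : dga_car -> dga_car;
  dga_deg0 : forall k, 0 \in dga_deg k;
  dga_degD : forall k x y, x \in dga_deg k -> y \in dga_deg k -> x + y \in dga_deg k;
  dga_degZ : forall k (c : K) x, x \in dga_deg k -> c *: x \in dga_deg k;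
  dga_span : forall x : dga_car, exists m (f : nat -> dga_car),
      (forall i, f i \in dga_deg i) /\ x = \sum_(i < m) f i;
  dga_direct : forall m (f : nat -> dga_car), (forall i, f i \in dga_deg i) ->
      \sum_(i < m) f i = 0 -> forall i, (i < m)%N -> f i = 0;
  dga_deg1 : 1 \in dga_deg 0;
  dga_degM : forall p q x y, x \in dga_deg p -> y \in dga_deg q ->
      x * y \in dga_deg (p + q);
  dga_gcomm : forall p q x y, x \in dga_deg p -> y \in dga_deg q ->
      x * y = (-1) ^+ (p * q) * (y * x);
  dga_dD : forall x y, dga_d (x + y) = dga_d x + dga_d y;
  dga_dZ : forall (c : K) x, dga_d (c *: x) = c *: dga_d x;
  dga_d_deg : forall k x, x \in dga_deg k -> dga_d x \in dga_deg k.+1;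
  dga_dd : forall x, dga_d (dga_d x) = 0;
  dga_leibniz : forall p x y, x \in dga_deg p ->
      dga_d (x * y) = dga_d x * y + (-1) ^+ p * (x * dga_d y)
}.

Arguments dga_car {K} d : rename.
Arguments dga_deg {K} d k.
Arguments dga_d {K} d x.


Definition cocycle {K : fieldType} (A : DGA K) (k : nat) (x : dga_car A) : Prop :=
  x \in dga_deg A k /\ dga_d A x = 0.

Definition coboundary {K : fieldType} (A : DGA K) (k : nat) (x : dga_car A) : Prop :=
  match k with
  | 0 => x = 0
  | j.+1 => exists y, y \in dga_deg A j /\ x = dga_d A y
  end.

Definition cohom_connected {K : fieldType} (A : DGA K) : Prop :=
  forall x, cocycle A 0 x -> exists c : K, x = c%:A.

Definition dga_morphism {K : fieldType} {A1 A2 : DGA K} (phi : dga_car A1 -> dga_car A2) : Prop :=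
  [/\ (forall x y, phi (x + y) = phi x + phi y) /\
      (forall (c : K) x, phi (c *: x) = c *: phi x),
      forall x y, phi (x * y) = phi x * phi y,
      phi 1 = 1,
      forall k x, x \in dga_deg A1 k -> phi x \in dga_deg A2 k &
      forall x, phi (dga_d A1 x) = dga_d A2 (phi x)].

Definition cohom_iso {K : fieldType} {A1 A2 : DGA K} (phi : dga_car A1 -> dga_car A2) (k : nat) : Prop :=
  (forall x, cocycle A1 k x -> coboundary A2 k (phi x) -> coboundary A1 k x) /\
  (forall y, cocycle A2 k y -> exists x, cocycle A1 k x /\ coboundary A2 k (phi x - y)).

(* V = K^n (column vectors), with an increasing filtration W_i, i in Z.
   W_i is the subspace { v | v^T lies in the row space of W i }. *)
Definition memW {K : fieldType} {n : nat} (W : int -> 'M[K]_n) (i : int) (v : 'cV[K]_n) : bool :=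
  (v^T <= W i)%MS.

Definition filtration {K : fieldType} {n : nat} (W : int -> 'M[K]_n) : Prop :=
  [/\ forall i : int, (W i <= W (i + 1)%R)%MS,
      exists i0 : int, forall i, i <= i0 -> W i == 0 &
      exists i1 : int, forall i, i1 <= i -> row_full (W i)].

(* W_k(End V): endomorphisms f (acting by v |-> f *m v) with f(W_i) in W_{i+k} *)
Definition WEnd {K : fieldType} {n : nat} (W : int -> 'M[K]_n) (k : int) (f : 'M[K]_n) : Prop :=
  forall i v, memW W i v -> memW W (i + k) (f *m v).

(* A (x) End(V) is identified with n x n matrices with entries in A;
   End(V) embeds via f |-> 1 (x) f. *)
Definition embK {K : fieldType} (A : DGA K) {n : nat} (f : 'M[K]_n) : 'M[dga_car A]_n :=
  map_mx (fun c : K => c%:A) f.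

(* M lies in the image of A^k (x) U -> A (x) End(V) *)
Definition tensor {K : fieldType} (A : DGA K) {n : nat} (k : nat) (U : 'M[K]_n -> Prop)
    (M : 'M[dga_car A]_n) : Prop :=
  exists m (a : 'I_m -> dga_car A) (u : 'I_m -> 'M[K]_n),
    [/\ forall j, a j \in dga_deg A k, forall j, U (u j) &
        M = \sum_(j < m) a j *: embK A (u j)].

Definition gbracket {K : fieldType} {A : DGA K} {n : nat} (p q : nat) (x y : 'M[dga_car A]_n) :
    'M[dga_car A]_n :=
  x *m y - ((-1) ^+ (p * q) : dga_car A) *: (y *m x).

Definition dmx {K : fieldType} {A : DGA K} {n : nat} (M : 'M[dga_car A]_n) : 'M[dga_car A]_n :=
  map_mx (dga_d A) M.

(* Objects of F^nil(A, V, W) (= objects of F^nil_gr(A, V, W)) *)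
Definition Fnil_obj {K : fieldType} {A : DGA K} {n : nat} (W : int -> 'M[K]_n) (w : 'M[dga_car A]_n) : Prop :=
  tensor A 1 (WEnd W (-1)) w /\
  dmx w + (((2%:R)^-1 : K)%:A : dga_car A) *: gbracket 1 1 w w = 0.

Definition flat_eq {K : fieldType} {A : DGA K} {n : nat} (w1 w2 a : 'M[dga_car A]_n) : Prop :=
  dmx a + w1 *m a - a *m w2 = 0.

Definition Fnil_hom {K : fieldType} {A : DGA K} {n : nat} (W : int -> 'M[K]_n) (w1 w2 a : 'M[dga_car A]_n) : Prop :=
  tensor A 0 (WEnd W 0) a /\ flat_eq w1 w2 a.

Definition Fnilgr_hom {K : fieldType} {A : DGA K} {n : nat} (W : int -> 'M[K]_n) (w1 w2 a : 'M[dga_car A]_n) : Prop :=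
  (exists b, tensor A 0 (WEnd W (-1)) b /\ a = 1%:M + b) /\ flat_eq w1 w2 a.

Definition fully_faithful {O1 O2 M1 M2 : Type}
    (obj1 : O1 -> Prop) (hom1 : O1 -> O1 -> M1 -> Prop)
    (hom2 : O2 -> O2 -> M2 -> Prop) (Fo : O1 -> O2) (Fm : M1 -> M2) : Prop :=
  forall x y, obj1 x -> obj1 y ->
    (forall a b, hom1 x y a -> hom1 x y b -> Fm a = Fm b -> a = b) /\
    (forall c, hom2 (Fo x) (Fo y) c -> exists a, hom1 x y a /\ Fm a = c).

(* Main.v *)
Require Import Defs.
From HB Require Import structures.
From mathcomp Require Import all_boot all_order all_algebra.
From mathcomp Require Import complex Rstruct.
From mathcomp Require Import zify.
From Stdlib Require Import ClassicalEpsilon.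
Import Order.TTheory GRing.Theory Num.Theory.
Local Open Scope ring_scope.
Set Implicit Arguments. Unset Strict Implicit. Unset Printing Implicit Defensive.

Definition Sel {K : fieldType} {r n : nat} (w : 'I_r -> int) (i : int) (S : 'M[K]_(r,n)) : 'M[K]_(r,n) :=
  \matrix_(q, c) (if w q <= i then S q c else 0).

Lemma Sel_all {K : fieldType} {r n : nat} (w : 'I_r -> int) (i : int) (S : 'M[K]_(r,n)) :
  (forall q, w q <= i) -> Sel w i S = S.
Proof. by move=> H; apply/matrixP=> q c; rewrite mxE H. Qed.

Lemma eqmx_refl' {K : fieldType} {m n : nat} (A : 'M[K]_(m,n)) : (A == A)%MS.
Proof. by rewrite /eqmx !submx_refl. Qed.

Lemma adapted_rows (K : fieldType) n (W : int -> 'M[K]_n) (i0 : int) :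
  (forall i, (W i <= W (i+1)%R)%MS) -> (forall i, i <= i0 -> W i == 0) ->
  forall t : nat, exists r (S : 'M[K]_(r,n)) (w : 'I_r -> int),
    [/\ row_free S, forall q, w q <= i0 + t%:Z & forall i, i <= i0 + t%:Z -> (W i == Sel w i S)%MS].
Proof.
move=> Hinc H0; elim=> [|t [r [S [w [fS wle Hi]]]]].
  exists 0%N, 0, (fun _ => i0); split.
  - by rewrite /row_free; have := rank_leq_row (0 : 'M[K]_(0,n)); rewrite leqn0.
  - by case.
  - move=> i; rewrite addr0 => /H0/eqP ->.
    by rewrite /eqmx sub0mx (flatmx0 (Sel _ _ _)) sub0mx.
set j := i0 + t%:Z.
have ej : i0 + (t.+1)%:Z = j + 1.
  by rewrite /j -addrA; congr (_ + _); rewrite -[1]/(1%:Z) -PoszD addn1.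
set D := (W (j+1)%R :\: W j)%MS.
set C := row_base D.
pose w' (q : 'I_(r + \rank D)) := match split q with inl q1 => w q1 | inr _ => j + 1 end.
have SelE : forall i, Sel w' i (col_mx S C) = col_mx (Sel w i S) (if j + 1 <= i then C else 0).
  move=> i; apply/matrixP=> q c; rewrite !mxE /w'.
  case: (split q) => q1; rewrite ?mxE //.
  by case: ifP => _; rewrite ?mxE.
have SjS : Sel w j S = S by apply: Sel_all.
have eC : (C == D)%MS by apply/eqmxP; exact: eq_row_base.
have eSW : (S == W j)%MS.
  by have := Hi j (lexx _); rewrite SjS /eqmx andbC.
exists (r + \rank D)%N, (col_mx S C), w'; split.
- rewrite /row_free.
  have e1 := mxrank_sum_cap S C.
  have e0 : \rank (S :&: C)%MS = 0%N.
    apply/eqP; rewrite -leqn0.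
    have : (S :&: C <= (0 : 'M[K]_n))%MS.
      apply: (submx_trans (capmxS (proj1 (andP eSW)) (proj1 (andP eC)))).
      by rewrite capmxC capmx_diff.
    by move/mxrankS; rewrite mxrank0.
  rewrite -(eqmx_rank (introT eqmxP (addsmxE S C))).
  move: e1; rewrite e0 addn0 => ->.
  by rewrite (eqP fS) (eqmx_rank eC).
- move=> q; rewrite ej /w'; case: (split q) => q1.
    by apply: (le_trans (wle q1)); rewrite lerDl.
  by [].
- move=> i; rewrite ej le_eqVlt => /orP [/eqP ->|].
    rewrite SelE.
    have -> : Sel w (j + 1) S = S.
      by apply: Sel_all => q; apply: (le_trans (wle q)); rewrite lerDl.
    rewrite lexx.
    apply/andP; split.
    + rewrite -(addsmxE S C).
      apply: (submx_trans (proj2 (andP (introT eqmxP (addsmx_diff_cap_eq (W (j+1)%R) (W j)))))).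
      rewrite addsmxC; apply: addsmxS; last by rewrite (proj2 (andP eC)).
      by apply: (submx_trans (capmxSr _ _)); rewrite (proj2 (andP eSW)).
    + rewrite col_mx_sub; apply/andP; split.
        by apply: (submx_trans (proj1 (andP eSW))); apply: Hinc.
      by apply: (submx_trans (proj1 (andP eC))); rewrite diffmxSl.
  move=> lt; have lei : i <= j by rewrite -ltzD1.
  rewrite SelE ifF; last by apply/negbTE; rewrite -ltNge.
  have := Hi i lei; case/andP=> h1 h2; apply/andP; split.
    by apply: (submx_trans h1); rewrite -(addsmxE _ _) addsmxSl.
  by rewrite col_mx_sub h2 sub0mx.
Qed.

Lemma Sel_diag {K : fieldType} {r n : nat} (w : 'I_r -> int) (i : int) (S : 'M[K]_(r,n)) :
  Sel w i S = diag_mx (\row_p (if w p <= i then 1 else 0)) *m S.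
Proof.
by apply/matrixP=> q c; rewrite mul_diag_mx !mxE; case: ifP; rewrite ?mul1r ?mul0r.
Qed.

Lemma Sel_coord {K : fieldType} {n : nat} (w : 'I_n -> int) (i : int) (S : 'M[K]_n) (v : 'rV[K]_n) :
  S \in unitmx ->
  (v <= Sel w i S)%MS <-> (forall p, i < w p -> (v *m invmx S) 0 p = 0).
Proof.
move=> uS; rewrite Sel_diag; split.
  case/submxP=> D ->; rewrite mulmxA mulmxK // => p lt.
  by rewrite mul_mx_diag !mxE ifF ?mulr0 //; apply/negbTE; rewrite -ltNge.
move=> H.
set x := v *m invmx S.
have ex : x = x *m diag_mx (\row_p (if w p <= i then 1 else 0)).
  apply/matrixP=> a p; have Hp := H p; rewrite /x in Hp *; rewrite mul_mx_diag !mxE (ord1 a) in Hp *.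
  case: ifP => h; first by rewrite mulr1.
  by rewrite mulr0; apply: Hp; rewrite ltNge h.
have -> : v = x *m (diag_mx (\row_p (if w p <= i then 1 else 0)) *m S).
  by rewrite mulmxA -ex /x mulmxKV.
exact: submxMl.
Qed.


Lemma adapted_basis (K : fieldType) n (W : int -> 'M[K]_n) : filtration W ->
  exists (B : 'M[K]_n) (w : 'I_n -> int), B \in unitmx /\
    forall i v, memW W i v <-> (forall p, i < w p -> (invmx B *m v) p 0 = 0).
Proof.
case=> Hinc [i0 H0] [i1 H1].
have [r [S [w [fS wle Hi]]]] := adapted_rows Hinc H0 `|i1 - i0|%N.
set T := i0 + _ in wle Hi.
have hT : i1 <= T by rewrite /T; lia.
have fT := H1 T hT.
have eST : (S == W T)%MS by have := Hi T (lexx _); rewrite Sel_all // /eqmx andbC.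
have Hall : forall i, (W i == Sel w i S)%MS.
  move=> i; case: (leP i T) => [/Hi //|lt].
  rewrite Sel_all; last by move=> q; apply: (le_trans (wle q)); apply: ltW.
  apply/andP; split; last by apply: submx_full; apply: H1; apply: (le_trans hT); apply: ltW.
  by apply: (submx_trans (submx_full _ fT)); case/andP: eST.
have er : r = n.
  by rewrite -(eqP fS) (eqmx_rank eST); apply/eqP.
subst r.
exists S^T, w; split; first by rewrite unitmx_tr -row_free_unit.
have uS : S \in unitmx by rewrite -row_free_unit.
move=> i v; rewrite /memW.
have -> : (v^T <= W i)%MS = (v^T <= Sel w i S)%MS.
  case/andP: (Hall i) => h1 h2; apply/idP/idP => h.
    exact: submx_trans h h1.
  exact: submx_trans h h2.
rewrite Sel_coord //.
have e : invmx S^T *m v = (v^T *m invmx S)^T by rewrite trmx_mul trmxK trmx_inv.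
rewrite e; split=> H p lt; first by move: (H p lt); rewrite [_^T _ _]mxE.
by move: (H p lt); rewrite [_^T _ _]mxE.
Qed.

Arguments dga_deg0 {K} _ _.
Arguments dga_degD {K} _ _ _ _.
Arguments dga_degZ {K} _ _ _ _.
Arguments dga_deg1 {K} _.
Arguments dga_degM {K} _ _ _ _ _.
Arguments dga_dD {K} _ _ _.
Arguments dga_dZ {K} _ _ _.
Arguments dga_d_deg {K} _ _ _.
Arguments dga_dd {K} _ _.
Arguments dga_leibniz {K} _ _ _ _.

Section DGAfacts.
Variables (K : fieldType) (A : DGA K).
Local Notation R := (dga_car A).
Local Notation d := (dga_d A).
Local Notation deg := (dga_deg A).

Lemma d0 : d 0 = 0.
Proof.
have h := dga_dD A 0 0; rewrite addr0 in h.
by move: h; rewrite -{1}[d 0]addr0 => /addrI <-.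
Qed.

Lemma dN x : d (- x) = - d x.
Proof. by rewrite -scaleN1r dga_dZ scaleN1r. Qed.

Lemma dB x y : d (x - y) = d x - d y.
Proof. by rewrite dga_dD dN. Qed.

Lemma d_sum I (r : seq I) (P : pred I) (F : I -> R) :
  d (\sum_(i <- r | P i) F i) = \sum_(i <- r | P i) d (F i).
Proof. exact: (big_morph _ (dga_dD A) d0). Qed.

Lemma d1 : d 1 = 0.
Proof.
have h := dga_leibniz A 0 1 1 (dga_deg1 A).
rewrite expr0 !mul1r mulr1 in h.
by move: h; rewrite -{1}[d 1]addr0 => /addrI <-.
Qed.

Lemma d_alg (c : K) : d (c%:A) = 0.
Proof. by rewrite dga_dZ d1 scaler0. Qed.

Lemma d_mulalgl (c : K) x : d (c%:A * x) = c%:A * d x.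
Proof. by rewrite !mulr_algl dga_dZ. Qed.

Lemma d_mulalgr (c : K) x : d (x * c%:A) = d x * c%:A.
Proof. by rewrite !mulr_algr dga_dZ. Qed.

Lemma deg_sum k I (r : seq I) (P : pred I) (F : I -> R) :
  (forall i, P i -> F i \in deg k) -> \sum_(i <- r | P i) F i \in deg k.
Proof.
move=> H; apply: (big_ind (fun x => x \in deg k)) => //.
- exact: dga_deg0.
- by move=> x y; apply: dga_degD.
Qed.

Lemma degN k x : x \in deg k -> - x \in deg k.
Proof. by move=> h; rewrite -scaleN1r; apply: dga_degZ. Qed.

Lemma degB k x y : x \in deg k -> y \in deg k -> x - y \in deg k.
Proof. by move=> hx hy; apply: dga_degD => //; apply: degN. Qed.

Lemma deg_mulalg k (c : K) x : x \in deg k -> c%:A * x \in deg k.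
Proof. by rewrite mulr_algl; apply: dga_degZ. Qed.

Lemma deg_mulalgr k (c : K) x : x \in deg k -> x * c%:A \in deg k.
Proof. by rewrite mulr_algr; apply: dga_degZ. Qed.

Lemma deg_alg (c : K) : c%:A \in deg 0.
Proof. by apply: dga_degZ; apply: dga_deg1. Qed.

End DGAfacts.

Section Mx.
Variables (K : fieldType) (A : DGA K) (n : nat).
Local Notation R := (dga_car A).
Local Notation d := (dga_d A).
Local Notation deg := (dga_deg A).
Local Notation M := ('M[R]_n).

Lemma embK1 : embK A (1%:M : 'M[K]_n) = 1%:M.
Proof. by apply/matrixP=> i j; rewrite !mxE; case: (i == j); rewrite /= ?scale1r ?scale0r. Qed.

Lemma embKM (P Q : 'M[K]_n) : embK A (P *m Q) = embK A P *m embK A Q.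
Proof.
apply/matrixP=> i j; rewrite !mxE scaler_suml; apply: eq_bigr => k _.
by rewrite !mxE mulr_algl scalerA.
Qed.

Lemma embKD (P Q : 'M[K]_n) : embK A (P + Q) = embK A P + embK A Q.
Proof. by apply/matrixP=> i j; rewrite !mxE scalerDl. Qed.

Lemma embK_scalel (P : 'M[K]_n) (a : R) (N : M) :
  embK A P *m (a *: N) = a *: (embK A P *m N).
Proof.
apply/matrixP=> i j; rewrite !mxE mulr_sumr; apply: eq_bigr => k _.
by rewrite !mxE !mulr_algl scalerAr.
Qed.

Lemma embK_scaler (P : 'M[K]_n) (a : R) (N : M) :
  (a *: N) *m embK A P = a *: (N *m embK A P).
Proof.
apply/matrixP=> i j; rewrite !mxE mulr_sumr; apply: eq_bigr => k _.
by rewrite !mxE mulrA.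
Qed.

Lemma dmxD (X Y : M) : dmx (X + Y) = dmx X + dmx Y.
Proof. by apply/matrixP=> i j; rewrite !mxE dga_dD. Qed.

Lemma dmxN (X : M) : dmx (- X) = - dmx X.
Proof. by apply/matrixP=> i j; rewrite !mxE dN. Qed.

Lemma dmxB (X Y : M) : dmx (X - Y) = dmx X - dmx Y.
Proof. by rewrite dmxD dmxN. Qed.

Lemma dmx0 : dmx (0 : M) = 0.
Proof. by apply/matrixP=> i j; rewrite !mxE d0. Qed.

Lemma dmx_embKl (P : 'M[K]_n) (X : M) : dmx (embK A P *m X) = embK A P *m dmx X.
Proof.
apply/matrixP=> i j; rewrite !mxE d_sum; apply: eq_bigr => k _.
by rewrite !mxE d_mulalgl.
Qed.

Lemma dmx_embKr (P : 'M[K]_n) (X : M) : dmx (X *m embK A P) = dmx X *m embK A P.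
Proof.
apply/matrixP=> i j; rewrite !mxE d_sum; apply: eq_bigr => k _.
by rewrite !mxE d_mulalgr.
Qed.

Lemma dmx_mul0 (X Y : M) : (forall i j, X i j \in deg 0) ->
  dmx (X *m Y) = dmx X *m Y + X *m dmx Y.
Proof.
move=> H; apply/matrixP=> i j; rewrite !mxE d_sum -big_split; apply: eq_bigr => k _.
by rewrite !mxE (dga_leibniz A _ _ _ (H i k)) expr0 mul1r.
Qed.

Lemma dmx_mul1 (X Y : M) : (forall i j, X i j \in deg 1) ->
  dmx (X *m Y) = dmx X *m Y - X *m dmx Y.
Proof.
move=> H; apply/matrixP=> i j; rewrite !mxE d_sum -sumrB; apply: eq_bigr => k _.
by rewrite !mxE (dga_leibniz A _ _ _ (H i k)) expr1 mulN1r.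
Qed.

Lemma dmx_dmx (X : M) : dmx (dmx X) = 0.
Proof. by apply/matrixP=> i j; rewrite !mxE dga_dd. Qed.

End Mx.

Section Cj.
Variables (K : fieldType) (A : DGA K) (n : nat) (B : 'M[K]_n).
Hypothesis uB : B \in unitmx.
Local Notation R := (dga_car A).
Local Notation M := ('M[R]_n).

Definition cj (X : M) : M := embK A (invmx B) *m X *m embK A B.

Lemma embK_BBi : embK A B *m embK A (invmx B) = 1%:M.
Proof. by rewrite -embKM mulmxV // embK1. Qed.

Lemma embK_BiB : embK A (invmx B) *m embK A B = 1%:M.
Proof. by rewrite -embKM mulVmx // embK1. Qed.

Lemma cjK (X : M) : embK A B *m cj X *m embK A (invmx B) = X.
Proof.
by rewrite /cj !mulmxA embK_BBi mul1mx -mulmxA embK_BBi mulmx1.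
Qed.

Lemma cj_inj (X Y : M) : cj X = cj Y -> X = Y.
Proof. by move=> h; rewrite -(cjK X) -(cjK Y) h. Qed.

Lemma cjM (X Y : M) : cj (X *m Y) = cj X *m cj Y.
Proof.
rewrite /cj !mulmxA; congr (_ *m _).
by rewrite -[(_ *m embK A B) *m embK A (invmx B)]mulmxA embK_BBi mulmx1.
Qed.

Lemma cjD (X Y : M) : cj (X + Y) = cj X + cj Y.
Proof. by rewrite /cj mulmxDr mulmxDl. Qed.

Lemma cjN (X : M) : cj (- X) = - cj X.
Proof. by rewrite /cj mulmxN mulNmx. Qed.

Lemma cjB (X Y : M) : cj (X - Y) = cj X - cj Y.
Proof. by rewrite cjD cjN. Qed.

Lemma cj0 : cj 0 = 0.
Proof. by rewrite /cj mulmx0 mul0mx. Qed.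

Lemma cj1 : cj 1%:M = 1%:M.
Proof. by rewrite /cj mulmx1 embK_BiB. Qed.

Lemma cj_dmx (X : M) : dmx (cj X) = cj (dmx X).
Proof. by rewrite /cj dmx_embKr dmx_embKl. Qed.

Lemma cj_scale (a : R) (u : 'M[K]_n) : cj (a *: embK A u) = a *: embK A (invmx B *m u *m B).
Proof. by rewrite /cj embK_scalel embK_scaler !embKM. Qed.

End Cj.

Definition good {K : fieldType} (A : DGA K) {n : nat} (w : 'I_n -> int) (p : nat) (k : int)
  (N : 'M[dga_car A]_n) : Prop :=
  (forall r s, N r s \in dga_deg A p) /\ (forall r s, w s + k < w r -> N r s = 0).
Arguments good {K} A {n} w p k N.

Lemma scalemxE' {R : pzRingType} {n : nat} (a : R) (N : 'M[R]_n) r s : (a *: N) r s = a * N r s.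
Proof. by rewrite mxE. Qed.

Lemma embKE {K : fieldType} (A : DGA K) {n : nat} (u : 'M[K]_n) r s : embK A u r s = (u r s)%:A.
Proof. by rewrite mxE. Qed.

Lemma deltaE' {R : pzRingType} {n : nat} (r s i j : 'I_n) : (delta_mx r s : 'M[R]_n) i j = ((i == r) && (j == s))%:R.
Proof. by rewrite mxE. Qed.

Section Tensor.
Variables (K : fieldType) (A : DGA K) (n : nat).
Local Notation R := (dga_car A).
Local Notation M := ('M[R]_n).

Lemma tensor0 p (U : 'M[K]_n -> Prop) : tensor A p U 0.
Proof.
exists 0%N, (fun _ => 0), (fun _ => 0); split; try by case.
by rewrite big_ord0.
Qed.

Lemma tensor1 p (U : 'M[K]_n -> Prop) a u : a \in dga_deg A p -> U u -> tensor A p U (a *: embK A u).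
Proof.
move=> ha hu; exists 1%N, (fun _ => a), (fun _ => u); split => //.
by rewrite big_ord1.
Qed.

Lemma tensorD p (U : 'M[K]_n -> Prop) X Y : tensor A p U X -> tensor A p U Y -> tensor A p U (X + Y).
Proof.
case=> [m1 [a1 [u1 [ha1 hu1 ->]]]] [m2 [a2 [u2 [ha2 hu2 ->]]]].
exists (m1 + m2)%N, (fun j => match split j with inl j1 => a1 j1 | inr j2 => a2 j2 end),
  (fun j => match split j with inl j1 => u1 j1 | inr j2 => u2 j2 end); split.
- by move=> j; case: (split j).
- by move=> j; case: (split j).
- by rewrite big_split_ord /=; congr (_ + _); apply: eq_bigr => j _;
    rewrite ?split_lshift ?split_rshift ?lshift_subproof ?rshift_subproof; [rewrite (unsplitK (inl _ j))|rewrite (unsplitK (inr _ j))].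
Qed.

End Tensor.


Section Char.
Variables (K : fieldType) (n : nat) (W : int -> 'M[K]_n) (B : 'M[K]_n) (w : 'I_n -> int).
Hypothesis uB : B \in unitmx.
Hypothesis HW : forall i v, memW W i v <-> (forall p, i < w p -> (invmx B *m v) p 0 = 0).

Lemma WEnd_char k f : WEnd W k f <-> (forall p q, w q + k < w p -> (invmx B *m f *m B) p q = 0).
Proof.
split.
  move=> H p q lt.
  have hv : memW W (w q) (B *m delta_mx q 0).
    apply/HW => p' lt'; rewrite mulKmx // mxE.
    case: eqP => [e|//]; by move: lt'; rewrite e ltxx.
  have := proj1 (HW _ _) (H _ _ hv) p lt.
  by rewrite !mulmxA -colE mxE.
move=> H i v /HW hv; apply/HW => p lt.
have -> : invmx B *m (f *m v) = (invmx B *m f *m B) *m (invmx B *m v).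
  by rewrite -!mulmxA mulKVmx.
rewrite mxE big1 // => q _.
case: (ltP i (w q)) => h; first by rewrite hv // mulr0.
rewrite H ?mul0r //; lia.
Qed.

Variable (A : DGA K).
Local Notation R := (dga_car A).

Lemma tensor_char p k (X : 'M[R]_n) :
  tensor A p (WEnd W k) X <-> good A w p k (cj B X).
Proof.
split.
  case=> [m [a [u [ha hu ->]]]].
  have e : cj B (\sum_(j < m) a j *: embK A (u j)) =
      \sum_(j < m) a j *: embK A (invmx B *m u j *m B).
    rewrite /cj mulmx_sumr mulmx_suml; apply: eq_bigr => j _.
    by rewrite -cj_scale.
  rewrite e; split=> r s; rewrite summxE.
    by apply: deg_sum => j _; rewrite !mxE; apply: deg_mulalgr.
  move=> lt; rewrite big1 // => j _.
  have h0 := proj1 (WEnd_char _ _) (hu j) _ _ lt.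
  by rewrite scalemxE' embKE h0 scale0r mulr0.
case=> hdeg hsupp.
set N := cj B X.
have eN : N = \sum_(r < n) \sum_(s < n) N r s *: embK A (delta_mx r s).
  apply/matrixP=> i j; rewrite summxE (bigD1 i) //= [X in _ + X]big1 ?addr0; last first.
    move=> r nr; rewrite summxE big1 // => s _; rewrite scalemxE' embKE deltaE'.
    by case: (i =P r) => [e|_]; [rewrite e eqxx in nr | rewrite /= scale0r mulr0].
  rewrite summxE (bigD1 j) //= [X in _ + X]big1 ?addr0; last first.
    move=> s ns; rewrite scalemxE' embKE deltaE' eqxx.
    by case: (j =P s) => [e|_]; [rewrite e eqxx in ns | rewrite /= scale0r mulr0].
  by rewrite scalemxE' embKE deltaE' !eqxx scale1r mulr1.
rewrite -(cjK uB X) -/N eN mulmx_sumr mulmx_suml.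
apply: (big_ind (tensor A p (WEnd W k))); [exact: tensor0|exact: tensorD|] => r _.
rewrite mulmx_sumr mulmx_suml.
apply: (big_ind (tensor A p (WEnd W k))); [exact: tensor0|exact: tensorD|] => s _.
rewrite embK_scalel embK_scaler -!embKM.
case: (ltP (w s + k) (w r)) => h.
  by rewrite hsupp // scale0r; apply: tensor0.
apply: tensor1 => //; apply/WEnd_char => p' q' lt.
rewrite !mulmxA mulVmx // mul1mx -mulmxA mulVmx // mulmx1 deltaE'.
case: eqP => [e1|//]; case: eqP => [e2|//] /=.
by move: lt; rewrite e1 e2 => lt; move: h; rewrite leNgt lt.
Qed.

End Char.

Lemma mxDE' {R : pzRingType} {n : nat} (X Y : 'M[R]_n) r s : (X + Y) r s = X r s + Y r s.
Proof. by rewrite mxE. Qed.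
Lemma mxNE' {R : pzRingType} {n : nat} (X : 'M[R]_n) r s : (- X) r s = - X r s.
Proof. by rewrite mxE. Qed.
Lemma mxBE' {R : pzRingType} {n : nat} (X Y : 'M[R]_n) r s : (X - Y) r s = X r s - Y r s.
Proof. by rewrite !mxE. Qed.
Lemma mx0E' {R : pzRingType} {n : nat} r s : (0 : 'M[R]_n) r s = 0.
Proof. by rewrite mxE. Qed.
Lemma mx1E' {R : pzRingType} {n : nat} (r s : 'I_n) : (1%:M : 'M[R]_n) r s = (r == s)%:R.
Proof. by rewrite mxE. Qed.
Lemma mulmxE' {R : pzRingType} {n : nat} (X Y : 'M[R]_n) r s : (X *m Y) r s = \sum_k X r k * Y k s.
Proof. by rewrite mxE. Qed.
Lemma dmxE' {K : fieldType} {A : DGA K} {n : nat} (X : 'M[dga_car A]_n) r s : dmx X r s = dga_d A (X r s).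
Proof. by rewrite mxE. Qed.
Lemma mapmxE' {R S : Type} (f : R -> S) {n : nat} (X : 'M[R]_n) r s : map_mx f X r s = f (X r s).
Proof. by rewrite mxE. Qed.

Section Support.
Variables (K : fieldType) (A : DGA K) (n : nat) (w : 'I_n -> int).
Local Notation R := (dga_car A).

Lemma prod_l_zero (X Y : 'M[R]_n) r s :
  (forall r s, w s + (-1) < w r -> X r s = 0) ->
  (forall k, w r < w k -> Y k s = 0) -> (X *m Y) r s = 0.
Proof.
move=> hX hY; rewrite mulmxE' big1 // => k _.
case: (ltP (w r) (w k)) => h; first by rewrite hY ?mulr0.
by rewrite hX ?mul0r //; lia.
Qed.

Lemma prod_r_zero (X Y : 'M[R]_n) r s :
  (forall r s, w s + (-1) < w r -> Y r s = 0) ->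
  (forall k, w k < w s -> X r k = 0) -> (X *m Y) r s = 0.
Proof.
move=> hY hX; rewrite mulmxE' big1 // => k _.
case: (ltP (w k) (w s)) => h; first by rewrite hX ?mul0r.
by rewrite hY ?mulr0 //; lia.
Qed.

Lemma deg_mulmx p q (X Y : 'M[R]_n) r s :
  (forall r s, X r s \in dga_deg A p) -> (forall r s, Y r s \in dga_deg A q) ->
  (X *m Y) r s \in dga_deg A (p + q).
Proof.
move=> hX hY; rewrite mulmxE'; apply: deg_sum => k _; exact: dga_degM.
Qed.

End Support.

Section Phi.
Variables (K : fieldType) (A1 A2 : DGA K) (phi : dga_car A1 -> dga_car A2).
Hypothesis Hm : dga_morphism phi.

Lemma phiD x y : phi (x + y) = phi x + phi y.
Proof. by case: Hm => [[h _] _ _ _ _]. Qed.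
Lemma phiZ (c : K) x : phi (c *: x) = c *: phi x.
Proof. by case: Hm => [[_ h] _ _ _ _]. Qed.
Lemma phiM x y : phi (x * y) = phi x * phi y.
Proof. by case: Hm. Qed.
Lemma phi1 : phi 1 = 1.
Proof. by case: Hm. Qed.
Lemma phi_deg k x : x \in dga_deg A1 k -> phi x \in dga_deg A2 k.
Proof. by case: Hm => _ _ _ h _; apply: h. Qed.
Lemma phi_d x : phi (dga_d A1 x) = dga_d A2 (phi x).
Proof. by case: Hm. Qed.
Lemma phi0 : phi 0 = 0.
Proof. by rewrite -(scale0r (0 : dga_car A1)) phiZ scale0r. Qed.
Lemma phiN x : phi (- x) = - phi x.
Proof. by rewrite -scaleN1r phiZ scaleN1r. Qed.
Lemma phiB x y : phi (x - y) = phi x - phi y.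
Proof. by rewrite phiD phiN. Qed.
Lemma phi_sum I (r : seq I) (P : pred I) (F : I -> dga_car A1) :
  phi (\sum_(i <- r | P i) F i) = \sum_(i <- r | P i) phi (F i).
Proof. exact: (big_morph _ phiD phi0). Qed.
Lemma phi_alg (c : K) : phi (c%:A) = c%:A.
Proof. by rewrite phiZ phi1. Qed.
Lemma phi_nat (m : nat) : phi (m%:R) = m%:R.
Proof. by elim: m => [|m IH]; rewrite ?phi0 // !mulrS phiD phi1 IH. Qed.

Variable n : nat.
Lemma map_mxM' (X Y : 'M[dga_car A1]_n) : map_mx phi (X *m Y) = map_mx phi X *m map_mx phi Y.
Proof.
apply/matrixP=> r s; rewrite mapmxE' !mulmxE' phi_sum; apply: eq_bigr => k _.
by rewrite phiM !mapmxE'.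
Qed.
Lemma map_mxD' (X Y : 'M[dga_car A1]_n) : map_mx phi (X + Y) = map_mx phi X + map_mx phi Y.
Proof. by apply/matrixP=> r s; rewrite !(mapmxE', mxDE') phiD. Qed.
Lemma map_mxB' (X Y : 'M[dga_car A1]_n) : map_mx phi (X - Y) = map_mx phi X - map_mx phi Y.
Proof. by apply/matrixP=> r s; rewrite !(mapmxE', mxBE') phiB. Qed.
Lemma map_mx0' : map_mx phi (0 : 'M[dga_car A1]_n) = 0.
Proof. by apply/matrixP=> r s; rewrite !(mapmxE', mx0E') phi0. Qed.
Lemma map_mx1' : map_mx phi (1%:M : 'M[dga_car A1]_n) = 1%:M.
Proof. by apply/matrixP=> r s; rewrite !(mapmxE', mx1E') phi_nat. Qed.
Lemma map_dmx (X : 'M[dga_car A1]_n) : map_mx phi (dmx X) = dmx (map_mx phi X).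
Proof. by apply/matrixP=> r s; rewrite !(mapmxE', dmxE') phi_d. Qed.
Lemma map_embK (P : 'M[K]_n) : map_mx phi (embK A1 P) = embK A2 P.
Proof. by apply/matrixP=> r s; rewrite !(mapmxE', embKE) phi_alg. Qed.
Lemma map_cj (B : 'M[K]_n) (X : 'M[dga_car A1]_n) : map_mx phi (cj B X) = cj B (map_mx phi X).
Proof. by rewrite /cj !map_mxM' !map_embK. Qed.

End Phi.

Lemma zmod_id1 (V : zmodType) (t1 t2 t3 t4 t5 : V) :
  0 + (- t1 - t2) - (t3 - t4) = - ((t2 + t1 - t5) + (t3 + t5 - t4)).
Proof.
rewrite add0r !opprD !opprK [- t2 - t1]addrC -[- t1 - t2 + t5 + _]addrA.
congr (_ + _); rewrite [- t3 - t5]addrC -[- t5 - t3 + t4]addrA.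
by rewrite addNKr.
Qed.

Definition Fl {K : fieldType} {A : DGA K} {n : nat} (w1 w2 a : 'M[dga_car A]_n) :=
  dmx a + w1 *m a - a *m w2.

Section Core.
Variables (K : fieldType) (A : DGA K) (n : nat) (w : 'I_n -> int).
Local Notation R := (dga_car A).
Variables (w1 w2 : 'M[R]_n).
Hypotheses (g1 : good A w 1 (-1) w1) (g2 : good A w 1 (-1) w2).

Lemma dFl (a : 'M[R]_n) :
  dmx w1 + w1 *m w1 = 0 -> dmx w2 + w2 *m w2 = 0 ->
  (forall r s, a r s \in dga_deg A 0) -> dmx (Fl w1 w2 a) = - (w1 *m Fl w1 w2 a + Fl w1 w2 a *m w2).
Proof.
move=> f1 f2 ha.
have e1 : dmx w1 = - (w1 *m w1) by apply/eqP; rewrite -addr_eq0 f1.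
have e2 : dmx w2 = - (w2 *m w2) by apply/eqP; rewrite -addr_eq0 f2.
rewrite /Fl dmxB dmxD dmx_dmx (dmx_mul1 _ g1.1) (dmx_mul0 _ ha) e1 e2 mulNmx mulmxN.
rewrite !(mulmxDr, mulmxDl, mulmxN, mulNmx) !mulmxA.
exact: zmod_id1.
Qed.

End Core.

Section CoreF.
Variables (K : fieldType) (A1 A2 : DGA K) (phi : dga_car A1 -> dga_car A2) (n : nat) (w : 'I_n -> int).
Variables (w1 w2 : 'M[dga_car A1]_n).
Hypotheses (g1 : good A1 w 1 (-1) w1) (g2 : good A1 w 1 (-1) w2).

Lemma core_faithful (c : 'M[dga_car A1]_n) :
  (forall x, cocycle A1 0 x -> coboundary A2 0 (phi x) -> coboundary A1 0 x) ->
  good A1 w 0 0 c -> Fl w1 w2 c = 0 -> map_mx phi c = 0 -> c = 0.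
Proof.
move=> inj0 gc fc hc.
have key : forall d : nat, forall r s, w s - w r < d%:Z -> c r s = 0.
  elim=> [|d IH] r s lt.
    by apply: gc.2; lia.
  have hF := fc; move/matrixP: hF => /(_ r s).
  rewrite /Fl mxBE' mxDE' dmxE' mx0E'.
  have hl : (w1 *m c) r s = 0 by apply: (prod_l_zero g1.2) => k hk; apply: IH; lia.
  have hr : (c *m w2) r s = 0 by apply: (prod_r_zero g2.2) => k hk; apply: IH; lia.
  rewrite hl hr addr0 subr0 => hd.
  have cc : cocycle A1 0 (c r s) by split; [exact: gc.1|exact: hd].
  apply: (inj0 _ cc); rewrite /coboundary.
  by move/matrixP: hc => /(_ r s); rewrite mapmxE' mx0E'.
apply/matrixP => r s; rewrite mx0E'; apply: (key (`|w s - w r|%N.+1)); lia.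
Qed.

End CoreF.

Lemma zmod_id2 (V : zmodType) (a x y c : V) : (a + x - y) - (a - c) = c + x - y.
Proof.
rewrite opprB addrC -[a + x - y]addrA -addrA addKr addrA.
by rewrite -addrA.
Qed.

Lemma zmod_id3 (V : zmodType) (p q x y : V) : p + q + (x + 0) - (y + 0) = p + x - y + q.
Proof. by rewrite !addr0 (addrAC p q x) (addrAC (p + x) q (- y)). Qed.

Lemma zmod_id4 (V : zmodType) (p q c : V) : (p - (q - c)) - p = c - q.
Proof. by rewrite addrAC subrr add0r opprB. Qed.


Section CoreFull.
Variables (K : fieldType) (A1 A2 : DGA K) (phi : dga_car A1 -> dga_car A2).
Hypotheses (Hm : dga_morphism phi) (H0 : cohom_iso phi 0) (H1 : cohom_iso phi 1).
Variables (n : nat) (w : 'I_n -> int) (w1 w2 : 'M[dga_car A1]_n).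
Hypotheses (g1 : good A1 w 1 (-1) w1) (g2 : good A1 w 1 (-1) w2).
Hypotheses (f1 : dmx w1 + w1 *m w1 = 0) (f2 : dmx w2 + w2 *m w2 = 0).
Local Notation d1 := (dga_d A1).
Local Notation d2 := (dga_d A2).

Lemma core_full (c : 'M[dga_car A2]_n) :
  good A2 w 0 0 c -> Fl (map_mx phi w1) (map_mx phi w2) c = 0 ->
  exists a, [/\ good A1 w 0 0 a, Fl w1 w2 a = 0 & map_mx phi a = c].
Proof.
move=> gc fc.
have Q : forall d : nat, exists a, good A1 w 0 0 a /\
    forall r s, w s - w r < d%:Z -> phi (a r s) = c r s /\ Fl w1 w2 a r s = 0.
  elim=> [|d [a [ga IH]]].
    exists 0; split.
      by split=> r s; rewrite mx0E' //; exact: dga_deg0.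
    move=> r s lt; rewrite mx0E' (phi0 Hm) (gc.2 r s); last by lia.
    split => //.
    by rewrite /Fl dmx0 mulmx0 mul0mx subr0 addr0 mx0E'.
  have ex : forall r s, exists dl : dga_car A1, dl \in dga_deg A1 0 /\
      (w s - w r = d%:Z -> d1 dl = - Fl w1 w2 a r s /\ phi dl = c r s - phi (a r s)) /\
      (w s - w r != d%:Z -> dl = 0).
    move=> r s; case: (eqVneq (w s - w r) d%:Z) => hd; last first.
      exists 0; split; first exact: dga_deg0.
      by split => // e; rewrite e eqxx in hd.
    set beta := Fl w1 w2 a r s.
    have hbdeg : beta \in dga_deg A1 1.
      rewrite /beta /Fl mxBE' mxDE' dmxE'; apply: degB; first apply: dga_degD.
      - exact: dga_d_deg (ga.1 r s).
      - by move: (deg_mulmx r s g1.1 ga.1); rewrite addn0.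
      - by move: (deg_mulmx r s ga.1 g2.1); rewrite add0n.
    have hbcl : d1 beta = 0.
      have := dFl g1 f1 f2 ga.1; move/matrixP => /(_ r s).
      rewrite dmxE' -/beta mxNE' (mxDE' (w1 *m _)).
      have hl : (w1 *m Fl w1 w2 a) r s = 0.
        by apply: (prod_l_zero g1.2) => k hk; apply: (IH k s _).2; lia.
      have hr : (Fl w1 w2 a *m w2) r s = 0.
        by apply: (prod_r_zero g2.2) => k hk; apply: (IH r k _).2; lia.
      by rewrite hl hr addr0 oppr0.
    have hpb : phi beta = d2 (phi (a r s) - c r s).
      have hc := fc; move/matrixP: hc => /(_ r s).
      rewrite /Fl mxBE' mxDE' dmxE' mx0E' => hc.
      have el : (map_mx phi w1 *m map_mx phi a) r s = (map_mx phi w1 *m c) r s.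
        rewrite !mulmxE'; apply: eq_bigr => k _; rewrite !mapmxE'.
        case: (ltP (w r) (w k)) => h.
          by rewrite (IH k s _).1 //; lia.
        by rewrite (g1.2 r k) ?(phi0 Hm) ?mul0r //; lia.
      have er : (map_mx phi a *m map_mx phi w2) r s = (c *m map_mx phi w2) r s.
        rewrite !mulmxE'; apply: eq_bigr => k _; rewrite !mapmxE'.
        case: (ltP (w k) (w s)) => h.
          by rewrite (IH r k _).1 //; lia.
        by rewrite (g2.2 k s) ?(phi0 Hm) ?mulr0 //; lia.
      rewrite /beta /Fl mxBE' mxDE' dmxE' (phiB Hm) (phiD Hm) (phi_d Hm).
      rewrite -[phi ((w1 *m a) r s)](mapmxE' phi) -[phi ((a *m w2) r s)](mapmxE' phi).
      rewrite !(map_mxM' Hm) el er dB.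
      apply/eqP; rewrite -subr_eq0 -[X in _ == X]hc; apply/eqP.
      exact: zmod_id2.
    have [y1 [hy1 eb]] : exists y, y \in dga_deg A1 0 /\ beta = d1 y.
      apply: (H1.1 beta (conj hbdeg hbcl)).
      exists (phi (a r s) - c r s); split => //.
      by apply: degB; [exact: (phi_deg Hm) (ga.1 r s) | exact: gc.1].
    set z := phi y1 - (phi (a r s) - c r s).
    have hz : cocycle A2 0 z.
      split.
        apply: degB; first exact: (phi_deg Hm).
        by apply: degB; [exact: (phi_deg Hm) (ga.1 r s) | exact: gc.1].
      by rewrite /z dB -(phi_d Hm) -eb hpb subrr.
    have [x [[hx hdx] hxz]] := H0.2 z hz.
    exists (x - y1); split; first exact: degB hx hy1.
    split; last by case/negP.
    move=> _; split; first by rewrite dB hdx -eb sub0r.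
    rewrite (phiB Hm); move/eqP: hxz; rewrite subr_eq0 => /eqP ->.
    exact: zmod_id4.
  have [f hf] : exists f : 'I_n -> 'I_n -> dga_car A1, forall r s,
      f r s \in dga_deg A1 0 /\
      (w s - w r = d%:Z -> d1 (f r s) = - Fl w1 w2 a r s /\ phi (f r s) = c r s - phi (a r s)) /\
      (w s - w r != d%:Z -> f r s = 0).
    exists (fun r s => proj1_sig (constructive_indefinite_description _ (ex r s))).
    by move=> r s; exact: (proj2_sig (constructive_indefinite_description _ (ex r s))).
  pose Dl := \matrix_(r, s) f r s.
  have DlE : forall r s, Dl r s = f r s by move=> r s; rewrite mxE.
  have Dl0 : forall r s, w s - w r != d%:Z -> Dl r s = 0.
    by move=> r s h; rewrite DlE (hf r s).2.2.
  exists (a + Dl); split.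
    split => r s; rewrite mxDE'.
      by apply: dga_degD; [exact: ga.1 | rewrite DlE; exact: (hf r s).1].
    move=> lt; rewrite (ga.2 r s lt) Dl0 ?addr0 //; apply/eqP; lia.
  move=> r s lt.
  have hFl : Fl w1 w2 (a + Dl) r s = Fl w1 w2 a r s + d1 (Dl r s).
    have hl : (w1 *m Dl) r s = 0.
      by apply: (prod_l_zero g1.2) => k hk; rewrite Dl0 //; apply/eqP; lia.
    have hr : (Dl *m w2) r s = 0.
      by apply: (prod_r_zero g2.2) => k hk; rewrite Dl0 //; apply/eqP; lia.
    rewrite /Fl dmxD mulmxDr mulmxDl !(mxBE', mxDE') !dmxE' hl hr.
    exact: zmod_id3.
  case: (eqVneq (w s - w r) d%:Z) => hd.
    have [e1 e2] := (hf r s).2.1 hd.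
    rewrite hFl mxDE' DlE (phiD Hm) e1 e2; split.
      by rewrite addrC subrK.
    by rewrite addrN.
  have hd' : w s - w r <> d%:Z by apply/eqP.
  have lt' : w s - w r < d%:Z by lia.
  rewrite hFl mxDE' (Dl0 r s hd) (phiD Hm) (phi0 Hm) addr0 d0 addr0.
  exact: IH r s lt'.
pose m := (\max_(r < n) `|w r|%N)%N.
have hb : forall r, (`|w r|%N <= m)%N by move=> r; exact: (leq_bigmax r).
have [a [ga Ha]] := Q (m.*2.+1).
have Ha' : forall r s, phi (a r s) = c r s /\ Fl w1 w2 a r s = 0.
  move=> r s; apply: Ha; have := hb r; have := hb s; lia.
exists a; split => //.
  by apply/matrixP => r s; rewrite mx0E'; exact: (Ha' r s).2.
by apply/matrixP => r s; rewrite mapmxE'; exact: (Ha' r s).1.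
Qed.

End CoreFull.

Lemma two_nz b : (2%:R : Kfield b) != 0.
Proof. case: b => /=.
  have h : (2%:R : Rdefinitions.R) != 0 by rewrite pnatr_eq0.
  exact: h.
have h : (2%:R : (complex Rdefinitions.R)) != 0 by rewrite pnatr_eq0.
exact: h.
Qed.

Section Final.
Variables (K : fieldType) (A : DGA K) (n : nat) (w : 'I_n -> int).
Local Notation R := (dga_car A).

Lemma obj_flat (W : int -> 'M[K]_n) (x : 'M[R]_n) :
  (2%:R : K) != 0 -> Fnil_obj W x -> dmx x + x *m x = 0.
Proof.
move=> h2 [_ e]; rewrite -[RHS]e; congr (_ + _).
apply/matrixP => r s; rewrite scalemxE' /gbracket mxBE' scalemxE' muln1 expr1 mulN1r opprK.
by rewrite mulr_algl -mulr2n -scaler_nat scalerA mulVf // scale1r.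
Qed.

Lemma good_sub p k (X Y : 'M[R]_n) : good A w p k X -> good A w p k Y -> good A w p k (X - Y).
Proof.
move=> [hX sX] [hY sY]; split=> r s; rewrite mxBE'; first exact: degB.
by move=> lt; rewrite sX // sY // subr0.
Qed.

Lemma deg_natr (m : nat) : (m%:R : R) \in dga_deg A 0.
Proof.
elim: m => [|m IH]; first exact: dga_deg0.
by rewrite mulrS; apply: dga_degD => //; exact: dga_deg1.
Qed.

Lemma good_one_plus (X : 'M[R]_n) : good A w 0 (-1) X -> good A w 0 0 (1%:M + X).
Proof.
move=> [hX sX]; split=> r s; rewrite mxDE' mx1E'; first by apply: dga_degD; [exact: deg_natr|exact: hX].
move=> lt; rewrite sX; last by lia.
have -> : (r == s) = false by apply/eqP => e; move: lt; rewrite e; lia.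
by rewrite addr0.
Qed.

Lemma zmod_id5 (V : zmodType) (a a' b b' c c' : V) :
  (a - a') + (b - b') - (c - c') = (a + b - c) - (a' + b' - c').
Proof.
rewrite [(a - a') + _]addrACA opprB [LHS]addrACA opprB [RHS]addrACA.
by congr (_ + _); rewrite opprD addrC.
Qed.

Lemma Fl_sub (w1 w2 X Y : 'M[R]_n) : Fl w1 w2 (X - Y) = Fl w1 w2 X - Fl w1 w2 Y.
Proof. by rewrite /Fl dmxB mulmxBr mulmxBl zmod_id5. Qed.

Lemma cj_Fl (B : 'M[K]_n) (uB : B \in unitmx) (w1 w2 X : 'M[R]_n) :
  cj B (Fl w1 w2 X) = Fl (cj B w1) (cj B w2) (cj B X).
Proof. by rewrite /Fl cjB // cjD // cj_dmx !cjM. Qed.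

End Final.

Lemma cjK' (K : fieldType) (A : DGA K) n (B : 'M[K]_n) (uB : B \in unitmx) (X : 'M[dga_car A]_n) :
  cj B (embK A B *m X *m embK A (invmx B)) = X.
Proof.
by rewrite /cj !mulmxA embK_BiB // mul1mx -mulmxA embK_BiB // mulmx1.
Qed.

Lemma core_gr (K : fieldType) (A1 A2 : DGA K) (phi : dga_car A1 -> dga_car A2)
  (Hm : dga_morphism phi)
  (inj0 : forall x, cocycle A1 0 x -> coboundary A2 0 (phi x) -> coboundary A1 0 x)
  n (w : 'I_n -> int) (w1 w2 a : 'M[dga_car A1]_n) :
  good A1 w 1 (-1) w1 -> good A1 w 1 (-1) w2 -> good A1 w 0 0 a -> Fl w1 w2 a = 0 ->
  good A2 w 0 (-1) (map_mx phi a - 1%:M) -> good A1 w 0 (-1) (a - 1%:M).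
Proof.
move=> g1 g2 ga fa hc.
split => r s.
  by rewrite mxBE' mx1E'; apply: degB; [exact: ga.1 | exact: deg_natr].
move=> lt; rewrite mxBE' mx1E'.
case: (ltP (w s) (w r)) => h.
  have -> : (r == s) = false by apply/eqP => e; move: h; rewrite e; lia.
  by rewrite (ga.2 r s) ?subr0 //; lia.
have hda : dga_d A1 (a r s) = 0.
  move/matrixP: fa => /(_ r s); rewrite /Fl mxBE' mxDE' dmxE' mx0E'.
  have hl : (w1 *m a) r s = 0.
    by apply: (prod_l_zero g1.2) => k hk; apply: ga.2; lia.
  have hr : (a *m w2) r s = 0.
    by apply: (prod_r_zero g2.2) => k hk; apply: ga.2; lia.
  by rewrite hl hr addr0 subr0.
have hdn : forall m : nat, dga_d A1 (m%:R) = 0.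
  elim=> [|m IH]; first exact: d0.
  by rewrite mulrS dga_dD IH d1 addr0.
apply: inj0.
  split; first by apply: degB; [exact: ga.1 | exact: deg_natr].
  by rewrite dB hda hdn subr0.
rewrite /coboundary (phiB Hm) (phi_nat Hm).
have := hc.2 r s; rewrite mxBE' mapmxE' mx1E'; apply; lia.
Qed.

Unset Implicit Arguments.

Theorem proposition10p2 (b : bool) (n : nat) (W : int -> 'M[Kfield b]_n)
    (A1 A2 : DGA (Kfield b)) (phi : dga_car A1 -> dga_car A2) :
  filtration W ->
  cohom_connected A1 -> cohom_connected A2 ->
  dga_morphism phi -> cohom_iso phi 0 -> cohom_iso phi 1 ->
  fully_faithful (Fnil_obj W) (Fnil_hom W) (Fnil_hom W)
    (map_mx phi) (map_mx phi) /\
  fully_faithful (Fnil_obj W) (Fnilgr_hom W) (Fnilgr_hom W)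
    (map_mx phi) (map_mx phi).
Proof.
move=> hW _ _ Hm H0 H1.
have h2 := two_nz b.
have [B [w [uB HW]]] := adapted_basis hW.
have TC1 := tensor_char uB HW (A:=A1).
have TC2 := tensor_char uB HW (A:=A2).
have inj0 : forall x, cocycle A1 0 x -> coboundary A2 0 (phi x) -> coboundary A1 0 x := H0.1.
have objP : forall x, Fnil_obj W x ->
    good A1 w 1 (-1) (cj B x) /\ dmx (cj B x) + cj B x *m cj B x = 0.
  move=> x ox; split; first by apply/TC1; exact: ox.1.
  by rewrite cj_dmx -cjM // -cjD (obj_flat h2 ox) cj0.
have flatP : forall (A : DGA (Kfield b)) (x y a : 'M[dga_car A]_n),
    flat_eq x y a <-> Fl (cj B x) (cj B y) (cj B a) = 0.
  move=> A x y a; rewrite -cj_Fl //; split => [h|h].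
    by rewrite /Fl h cj0.
  by apply: (cj_inj uB); rewrite h cj0.
have FF1 : fully_faithful (Fnil_obj W) (Fnil_hom W) (Fnil_hom W) (map_mx phi) (map_mx phi).
  move=> x y ox oy; have [gx fx] := objP x ox; have [gy fy] := objP y oy.
  split.
    move=> a a' [ta fa] [ta' fa'] e.
    apply: (cj_inj uB); apply/eqP; rewrite -subr_eq0 -cjB; apply/eqP.
    apply: (core_faithful gx gy inj0).
    - by rewrite cjB; apply: good_sub; [exact/TC1 | exact/TC1].
    - by rewrite cjB Fl_sub (proj1 (flatP _ _ _ _) fa) (proj1 (flatP _ _ _ _) fa') subr0.
    - by rewrite (map_cj Hm) (map_mxB' Hm) e subrr cj0.
  move=> c [tc fc].
  have gc := proj1 (TC2 0 0 c) tc.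
  have fc' := proj1 (flatP _ _ _ _) fc; rewrite -!(map_cj Hm) in fc'.
  have [a' [ga' fa' ea']] := core_full Hm H0 H1 gx gy fx fy gc fc'.
  exists (embK A1 B *m a' *m embK A1 (invmx B)).
  have ca : cj B (embK A1 B *m a' *m embK A1 (invmx B)) = a' := cjK' uB a'.
  split; last by apply: (cj_inj uB); rewrite -(map_cj Hm) ca.
  split; first by apply/TC1; rewrite ca.
  by apply/flatP; rewrite ca.
split => //.
move=> x y ox oy; have [gx fx] := objP x ox; have [gy fy] := objP y oy.
have [F1 F2] := FF1 x y ox oy.
have grP : forall (A : DGA (Kfield b)) (x' y' a : 'M[dga_car A]_n),
    Fnilgr_hom W x' y' a -> Fnil_hom W x' y' a.
  move=> A x' y' a [[bb [tb ->]] fa]; split => //.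
  apply/(tensor_char uB HW); rewrite cjD cj1 //; apply: good_one_plus; exact/(tensor_char uB HW).
split.
  by move=> a a' ha ha' e; apply: F1 => //; exact: grP.
move=> c hc.
have [a [ha ea]] := F2 c (grP _ _ _ _ hc).
exists a; split => //.
case: hc => [[bc [tbc ec]] fc].
split; last exact: ha.2.
exists (a - 1%:M); split; last by rewrite addrC subrK.
apply/TC1; rewrite cjB cj1 //.
apply: (core_gr Hm inj0 gx gy).
- exact: (proj1 (TC1 0 0 a) ha.1).
- exact: (proj1 (flatP _ _ _ _) ha.2).
- rewrite (map_cj Hm) ea ec cjD cj1 // addrC addKr.
  exact: (proj1 (TC2 0 (-1) bc) tbc).
Qed.
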